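(* For each positive integer $i$ let $\mathcal{F}_i$ be an edge-coloured digraph with $i$ vertices all of whose edges are double. For each composition $\alpha=(\alpha_1,\dots,\alpha_k)\vDash n$, let $\mathcal{F}_\alpha$ be the solid sum $\mathcal{F}_{\alpha_1}\ \text{solid-sum}\ \mathcal{F}_{\alpha_2}\ \text{solid-sum}\cdots\text{solid-sum}\ \mathcal{F}_{\alpha_k}$. Then $\{\mathscr{X}_{\mathcal{F}_\alpha}(x):\alpha\vDash n\}$ is a basis of $\mathrm{QSym}_n(x)$.
   Context: An edge-coloured digraph is a finite simple digraph with each edge of type dashed, solid ($a\rightarrow b$) or double ($a\Rightarrow b$). The solid sum of $G_1$ and $G_2$ is their disjoint union together with a solid edge $(a,b)$ for every $a\in V(G_1)$, $b\in V(G_2)$ (this operation is associative). A proper vertex-colouring is $\kappa:V\to\mathbb{P}$ with $\kappa(a)\ne\kappa(b)$, $\kappa(a)<\kappa(b)$, $\kappa(a)\le\kappa(b)$ for dashed, solid, double edges $(a,b)$ respectively, and $\mathscr{X}_G(x)=\sum_\kappa\prod_{a\in V(G)}x_{\kappa(a)}$ over proper vertex-colourings, in commuting variables. $\mathrm{QSym}_n(x)$ is the space of quasisymmetric functions homogeneous of degree $n$ (formal power series such that for each composition $(\beta_1,\dots,\beta_k)$ of $n$ all monomials $x_{i_1}^{\beta_1}\cdots x_{i_k}^{\beta_k}$ with $i_1<\dots<i_k$ have the same coefficient, and no other monomials occur). *)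

(* Defs.v *)
From mathcomp Require Import all_boot all_order all_algebra.
Set Implicit Arguments. Unset Strict Implicit. Unset Printing Implicit Defensive.
Import GRing.Theory Num.Theory.
Local Open Scope ring_scope.

Inductive ecol := Dashed | Solid | Double.

Record ecdigraph := ECD { nv : nat; edge : 'I_nv -> 'I_nv -> option ecol }.

(* simple: no loops (at most one edge per ordered pair is built into [edge]) *)
Definition simple_ecd (G : ecdigraph) : Prop := forall a, @edge G a a = None.

Definition empty_ecd : ecdigraph := @ECD 0 (fun _ _ => None).

Definition solid_sum (G H : ecdigraph) : ecdigraph :=
  @ECD (nv G + nv H) (fun a b =>
    match split a, split b with
    | inl x, inl y => @edge G x y
    | inr x, inr y => @edge H x y
    | inl _, inr _ => Some Solid
    | inr _, inl _ => None
    end).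

Definition solid_sum_list (s : seq ecdigraph) : ecdigraph :=
  foldr solid_sum empty_ecd s.

Definition is_comp (n : nat) (s : seq nat) : bool :=
  all (fun a => 0 < a)%N s && (sumn s == n).

Fixpoint seqs (m k : nat) : seq (seq nat) :=
  if m is m'.+1 then [seq i :: s | i <- iota 1 k, s <- seqs m' k] else [:: [::]].

Definition compn (n : nat) : seq (seq nat) :=
  [seq s <- flatten [seq seqs m n | m <- iota 0 n.+1] | is_comp n s].

(* A monomial x_{i_1}^{b_1} ... x_{i_k}^{b_k}, 0 < i_1 < ... < i_k, b_j > 0,
   is encoded as the list [:: (i_1,b_1); ...; (i_k,b_k)]. *)
Definition wf_mono (m : seq (nat * nat)) : bool :=
  sorted ltn (map fst m) && all (fun p => (0 < p.1) && (0 < p.2))%N m.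

Definition mdeg (m : seq (nat * nat)) : nat := sumn (map snd m).

(* A formal power series in commuting variables x_1, x_2, ... over Q:
   its coefficient on each (well-formed code of a) monomial. *)
Definition series := seq (nat * nat) -> rat.

Definition QSym (n : nat) (f : series) : Prop :=
  (forall m, wf_mono m -> mdeg m != n -> f m = 0) /\
  (forall m m', wf_mono m -> wf_mono m' -> map snd m = map snd m' -> f m = f m').

Definition proper_edge (e : option ecol) (x y : nat) : bool :=
  match e with
  | None => true
  | Some Dashed => x != y
  | Some Solid => (x < y)%N
  | Some Double => (x <= y)%N
  end.

Definition proper_col (G : ecdigraph) (k : 'I_(nv G) -> nat) : bool :=
  [forall a, forall b, proper_edge (@edge G a b) (k a) (k b)].

Definition mono_of (v : nat) (k : 'I_v -> nat) : seq (nat * nat) :=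
  let vs := [seq k a | a <- enum 'I_v] in
  [seq (i, count_mem i vs) | i <- sort leq (undup vs)].

(* every colouring with monomial m takes values <= max index of m *)
Definition bnd (m : seq (nat * nat)) : nat := (\max_(p <- m) p.1).+1.

Definition chromQ (G : ecdigraph) : series := fun m =>
  (#|[set k : {ffun 'I_(nv G) -> 'I_(bnd m)} |
      [forall a, (0 < k a)%N] && @proper_col G (fun a => nat_of_ord (k a))
      && (mono_of (fun a => nat_of_ord (k a)) == m)]|)%:R.

(* b_i (i in I, I duplicate-free) is a basis of the Q-space P of series *)
Definition is_basis (I : seq (seq nat)) (P : series -> Prop)
    (b : seq nat -> series) : Prop :=
  [/\ forall i, i \in I -> P (b i),
      forall c : seq nat -> rat,
        (forall m, wf_mono m -> \sum_(i <- I) c i * b i m = 0) ->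
        forall i, i \in I -> c i = 0
    & forall f, P f -> exists c : seq nat -> rat,
        forall m, wf_mono m -> f m = \sum_(i <- I) c i * b i m].

(* Main.v *)
Require Import Defs.
From mathcomp Require Import all_boot all_order all_algebra.
From mathcomp Require Import zify.
Set Implicit Arguments. Unset Strict Implicit. Unset Printing Implicit Defensive.

Definition cnt v (k : 'I_v -> nat) i := count_mem i [seq k a | a <- enum 'I_v].
Definition mlt (m : seq (nat * nat)) i :=
  if i \in map fst m then nth 0%N (map snd m) (index i (map fst m)) else 0%N.

Lemma mlt_mono v (k : 'I_v -> nat) i : mlt (mono_of k) i = cnt k i.
Proof.
rewrite /mlt /mono_of /cnt.
set vs := [seq k a | a <- enum 'I_v].
have -> : [seq p.1 | p <- [seq (j, count_mem j vs) | j <- sort leq (undup vs)]]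
   = sort leq (undup vs) by rewrite -map_comp map_id.
rewrite -map_comp mem_sort mem_undup.
case: ifP => iv.
  rewrite (nth_map 0%N); last by rewrite index_mem mem_sort mem_undup.
  by rewrite /= nth_index // mem_sort mem_undup.
by apply/esym/count_memPn; rewrite iv.
Qed.

Lemma wf_mono_of v (k : 'I_v -> nat) : (forall a, 0 < k a)%N -> wf_mono (mono_of k).
Proof.
move=> kp; rewrite /wf_mono /mono_of -map_comp map_id.
apply/andP; split.
  by rewrite ltn_sorted_uniq_leq sort_uniq undup_uniq sort_sorted //; exact: leq_total.
apply/allP => p /mapP [j]; rewrite mem_sort mem_undup => jv ->/=.
case/mapP: jv => a _ ->; rewrite kp /= -has_count; apply/hasP; exists (k a) => //=.
by apply: map_f; rewrite mem_enum.
Qed.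

Lemma mlt_pos m i : wf_mono m -> (0 < mlt m i)%N = (i \in map fst m).
Proof.
case/andP=> _ /allP pos; rewrite /mlt; case: ifP => // im.
have : nth 0%N (map snd m) (index i (map fst m)) \in map snd m.
  by apply: mem_nth; rewrite size_map -(size_map fst) index_mem.
by case/mapP => p /pos /andP [_ h] ->.
Qed.

Lemma wf_uniq m : wf_mono m -> uniq (map fst m).
Proof. by case/andP => s _; move: s; rewrite ltn_sorted_uniq_leq => /andP[]. Qed.

Lemma wf_eq m1 m2 : wf_mono m1 -> wf_mono m2 ->
  (forall i, mlt m1 i = mlt m2 i) -> m1 = m2.
Proof.
move=> w1 w2 e.
have K : map fst m1 = map fst m2.
  apply: (irr_sorted_eq ltn_trans ltnn).
  - by case/andP: w1. - by case/andP: w2.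
  by move=> i; rewrite -mlt_pos // e mlt_pos.
have sz : size m1 = size m2 by rewrite -(size_map fst) K size_map.
have E : map snd m1 = map snd m2.
  apply: (@eq_from_nth _ 0%N); first by rewrite !size_map.
  move=> j; rewrite size_map => jl.
  have := e (nth 0%N (map fst m1) j).
  set x := nth 0%N (map fst m1) j.
  have x1 : x \in map fst m1 by rewrite mem_nth ?size_map.
  have x2 : x \in map fst m2 by rewrite -K.
  have i1 : index x (map fst m1) = j by rewrite index_uniq ?size_map ?wf_uniq.
  have i2 : index x (map fst m2) = j by rewrite -K.
  by rewrite /mlt x1 x2 i1 i2.
by rewrite -(zip_unzip m1) -(zip_unzip m2) /unzip1 /unzip2 K E.
Qed.

Lemma mono_ofP v (k : 'I_v -> nat) m : wf_mono m -> (forall a, 0 < k a)%N ->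
  (mono_of k = m) <-> (forall i, cnt k i = mlt m i).
Proof.
move=> w kp; split.
  by move=> <- i; rewrite mlt_mono.
by move=> h; apply: wf_eq => // [|i]; [exact: wf_mono_of | rewrite mlt_mono].
Qed.

Lemma mdeg_mono v (k : 'I_v -> nat) : mdeg (mono_of k) = v.
Proof.
rewrite /mdeg /mono_of -map_comp.
set vs := [seq k a | a <- enum 'I_v].
have -> : v = size vs by rewrite size_map size_enum_ord.
have := perm_count_undup vs => /perm_size <-.
rewrite size_flatten /shape -map_comp.
rewrite (@eq_map _ _ (size \o _) (fun x => count_mem x vs)); last by move=> x; rewrite /= size_nseq.
rewrite /= !sumnE big_map [in RHS]big_map.
by apply: perm_big; rewrite perm_sort.
Qed.

Lemma cntE v (k : 'I_v -> nat) i : cnt k i = count (fun a => k a == i) (enum 'I_v).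
Proof. by rewrite /cnt count_map. Qed.

Lemma cnt_val_pos v (k : 'I_v -> nat) a : (0 < cnt k (k a))%N.
Proof. by rewrite cntE -has_count; apply/hasP; exists a; rewrite ?mem_enum. Qed.

Lemma key_bnd m x : x \in map fst m -> (x < bnd m)%N.
Proof.
case/mapP => p pm ->; rewrite /bnd ltnS.
exact: (@leq_bigmax_seq _ m xpredT (fun p : nat * nat => p.1) p pm).
Qed.

Lemma proper_edge_mono e (f : nat -> nat) (D : pred nat) x y :
  {in D &, forall x y, x < y -> f x < f y}%N -> x \in D -> y \in D ->
  proper_edge e x y -> proper_edge e (f x) (f y).
Proof.
move=> fm xD yD; case: e => [[]|] //=.
- move=> nxy; case: (ltngtP x y) nxy => // h _.
    by rewrite neq_ltn (fm x y).
  by rewrite neq_ltn (fm y x) ?orbT.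
- by apply: fm.
- rewrite leq_eqVlt => /orP [/eqP -> //|h].
  by apply: ltnW; apply: fm.
Qed.

Lemma vals_in_keys G m (k : 'I_(nv G) -> nat) :
  wf_mono m -> (forall a, 0 < k a)%N -> mono_of k = m -> forall a, k a \in map fst m.
Proof.
move=> w kp e a; rewrite -mlt_pos //.
by have /(_ (k a)) <- := (proj1 (mono_ofP w kp) e); exact: cnt_val_pos.
Qed.

Lemma chrom_le G m m' : wf_mono m -> wf_mono m' -> map snd m = map snd m' ->
  (#|[set k : {ffun 'I_(nv G) -> 'I_(bnd m)} |
      [forall a, (0 < k a)%N] && @proper_col G (fun a => nat_of_ord (k a))
      && (mono_of (fun a => nat_of_ord (k a)) == m)]|
  <= #|[set k : {ffun 'I_(nv G) -> 'I_(bnd m')} |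
      [forall a, (0 < k a)%N] && @proper_col G (fun a => nat_of_ord (k a))
      && (mono_of (fun a => nat_of_ord (k a)) == m')]|)%N.
Proof.
move=> w w' E.
set K := map fst m; set K' := map fst m'.
have szK : size K = size K' by rewrite /K /K' !size_map -(size_map snd m) E size_map.
have uK : uniq K by exact: wf_uniq.
have uK' : uniq K' by exact: wf_uniq.
have sK : sorted ltn K by case/andP: w.
have sK' : sorted ltn K' by case/andP: w'.
pose phi x := nth 0%N K' (index x K).
have phiK x : x \in K -> phi x \in K'.
  by move=> xK; rewrite /phi mem_nth // -szK index_mem.
have idx_mono x y : x \in K -> y \in K -> (x < y)%N -> (index x K < index y K)%N.
  move=> xK yK xy; case: (ltngtP (index x K) (index y K)) => // h.
    have := sorted_ltn_nth ltn_trans 0%N sK.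
    move=> /(_ (index y K) (index x K)); rewrite !inE !index_mem => /(_ yK xK h).
    by rewrite !nth_index // => /(ltn_trans xy); rewrite ltnn.
  by move: xy; rewrite -(nth_index 0%N xK) h nth_index // ltnn.
have phim : {in K &, forall x y, x < y -> phi x < phi y}%N.
  move=> x y xK yK xy; apply: (sorted_ltn_nth ltn_trans 0%N sK'); rewrite ?inE -?szK ?index_mem //.
  exact: idx_mono.
have phiinj : {in K &, injective phi}.
  move=> x y xK yK; case: (ltngtP x y) => // h.
    by move: (phim x y xK yK h) => /[swap] ->; rewrite ltnn.
  by move: (phim y x yK xK h) => /[swap] ->; rewrite ltnn.
have phimlt x : x \in K -> mlt m' (phi x) = mlt m x.
  move=> xK; rewrite /mlt -/K -/K' phiK // xK.
  by rewrite /phi index_uniq ?E // -szK index_mem.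
have phisurj y : y \in K' -> exists2 x, x \in K & phi x = y.
  move=> yK; exists (nth 0%N K (index y K')); first by rewrite mem_nth // szK index_mem.
  by rewrite /phi index_uniq ?szK ?index_mem // nth_index.
pose Phi (k : {ffun 'I_(nv G) -> 'I_(bnd m)}) : {ffun 'I_(nv G) -> 'I_(bnd m')} :=
  [ffun a => inord (phi (k a))].
set S := [set k | _]; set S' := [set k | _].
have inS k : k \in S -> forall a, (nat_of_ord (k a)) \in K.
  rewrite inE => /andP [/andP [/forallP kp _] /eqP km].
  by apply: (vals_in_keys w) => // a; apply: kp.
have PhiE k a : k \in S -> nat_of_ord (Phi k a) = phi (k a).
  move=> kS; rewrite ffunE inordK //.
  by apply: key_bnd; apply: phiK; apply: inS.
rewrite -(card_in_imset (f := Phi)); last first.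
  move=> k1 k2 k1S k2S e; apply/ffunP => a; apply: val_inj => /=.
  apply: phiinj; try by apply: inS.
  by rewrite -!PhiE // e.
apply: subset_leq_card; apply/subsetP => _ /imsetP [k kS ->].
have kS' := kS; rewrite inE in kS'; case/andP: kS' => /andP [/forallP kp kpr] /eqP km.
have posK' y : y \in K' -> (0 < y)%N.
  by case/andP: w' => _ /allP al /mapP [p /al /andP [h _] ->].
rewrite inE; apply/andP; split; first (apply/andP; split).
- by apply/forallP => a; rewrite PhiE //; apply: posK'; apply: phiK; apply: inS.
- apply/forallP => a; apply/forallP => b; rewrite !PhiE //.
  apply: (proper_edge_mono (D := mem K)) => //; try by apply: inS.
  by move/forallP: kpr => /(_ a) /forallP /(_ b).
- apply/eqP; apply/mono_ofP => //.
    by move=> a; rewrite PhiE //; apply: posK'; apply: phiK; apply: inS.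
  move=> i; rewrite cntE.
  rewrite (eq_count (a2 := fun a => phi (k a) == i)); last by move=> a; rewrite PhiE.
  case iK' : (i \in K').
    case: (phisurj i iK') => x xK <-.
    rewrite phimlt // -(proj1 (mono_ofP w (fun a => kp a)) km) cntE.
    apply: eq_count => a; apply/eqP/eqP => [|-> //].
    by apply: phiinj => //; apply: inS.
  rewrite /mlt -/K' iK'; apply/eqP; rewrite -leqn0 leqNgt -has_count; apply/hasP => -[a _ /eqP h].
  by move: iK'; rewrite -h phiK //; apply: inS.
Qed.

Fixpoint blk (Gs : seq ecdigraph) : 'I_(nv (solid_sum_list Gs)) -> nat :=
  match Gs return 'I_(nv (solid_sum_list Gs)) -> nat with
  | [::] => fun _ => 0%N
  | G :: Gs' => fun u => match split u with inl _ => 0%N | inr x => (@blk Gs' x).+1 end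
  end.

Definition alldouble (Gs : seq ecdigraph) :=
  forall G, List.In G Gs -> forall a b c, @edge G a b = Some c -> c = Double.

Lemma blk_lt Gs u : (@blk Gs u < size Gs)%N.
Proof.
elim: Gs u => [|G Gs IH] u /=; first by case: u.
by case: (split u) => x //; rewrite ltnS.
Qed.

Lemma blk_edge_lt Gs u w : (@blk Gs u < @blk Gs w)%N ->
  @edge (solid_sum_list Gs) u w = Some Solid.
Proof.
elim: Gs u w => [|G Gs IH] u w /=; first by case: u.
by case: (split u) => x; case: (split w) => y //; rewrite ltnS => /IH.
Qed.

Lemma blk_edge Gs u w c : alldouble Gs ->
  @edge (solid_sum_list Gs) u w = Some c ->
  (c = Solid /\ (@blk Gs u < @blk Gs w)%N) \/ (c = Double /\ @blk Gs u = @blk Gs w).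
Proof.
elim: Gs u w => [|G Gs IH] u w D /=; first by case: u.
case: (split u) => x; case: (split w) => y //.
- by move=> /(D G (or_introl erefl)) ->; right.
- by case=> <-; left.
- rewrite ltnS => /IH [].
  + by move=> H' H1; apply: D; right.
  + by move=> h; left.
  + by move=> [-> ->]; right.
Qed.

Lemma count_enum_sum N (P : pred 'I_N) : count P (enum 'I_N) = (\sum_(u < N) P u)%N.
Proof.
rewrite -sum1_count big_enum_cond /= big_mkcond /=.
by apply: eq_bigr => i _; case: (P i).
Qed.

Lemma blk_count Gs i : (\sum_(u < nv (solid_sum_list Gs)) (@blk Gs u == i))%N = nth 0%N (map nv Gs) i.
Proof.
elim: Gs i => [|G Gs IH] i /=; first by rewrite big_ord0; case: i.
rewrite big_split_ord /=.
have L x : split (lshift (nv (solid_sum_list Gs)) x) = inl x.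
  by rewrite -[lshift _ x]/(unsplit (inl x)) unsplitK.
have R x : split (rshift (nv G) x) = inr x.
  by rewrite -[rshift _ x]/(unsplit (inr x)) unsplitK.
under eq_bigr do rewrite L.
under [X in (_ + X)%N]eq_bigr do rewrite R.
case: i => [|i].
  rewrite [X in (_ + X)%N]big1 // addn0.
  by rewrite (eq_bigr (fun _ => 1%N)) // sum1_card card_ord.
rewrite big1 // add0n /= -IH; apply: eq_bigr => u _; by rewrite eqSS.
Qed.

Lemma block_arg N (blk : 'I_N -> nat) (k : 'I_N -> nat) s t :
  (forall u w, blk u < blk w -> k u < k w)%N ->
  (forall i, i < s -> exists u, blk u = i)%N ->
  (forall u, blk u < s)%N ->
  (forall u, 1 <= k u <= t)%N ->
  (s <= t)%N /\ (s = t -> forall u, k u = (blk u).+1).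
Proof.
move=> H1 H2 H3 H4.
have lo : forall i u, blk u = i -> (i.+1 <= k u)%N.
  elim=> [|i IH] u bu; first by case/andP: (H4 u).
  have [w bw] : exists w, blk w = i by apply: H2; have := H3 u; rewrite bu; lia.
  have := IH w bw; have := H1 w u; rewrite bw bu ltnSn => /(_ isT); lia.
have hi : forall d u, (blk u + d).+1 = s -> (k u + d <= t)%N.
  elim=> [|d IH] u bu; first by rewrite addn0; case/andP: (H4 u).
  have [w bw] : exists w, blk w = (blk u).+1 by apply: H2; lia.
  have := IH w; rewrite bw => /(_ ltac:(lia)).
  have := H1 u w; rewrite bw ltnSn => /(_ isT); lia.
have hi' u : (k u + (s - (blk u).+1) <= t)%N.
  apply: hi; have := H3 u; lia.
split.
  case: (posnP s) => [-> //|s0].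
  have [u bu] := H2 0%N s0; have := hi' u; have := lo _ _ bu; rewrite bu; lia.
move=> st u; have := hi' u; have := lo _ u erefl; have := H3 u; lia.
Qed.

Definition goodF (F : nat -> ecdigraph) :=
  (forall i, (0 < i)%N -> nv (F i) = i) /\
  (forall i, (0 < i)%N -> forall a b c, @edge (F i) a b = Some c -> c = Double).

Definition canon (b : seq nat) : seq (nat * nat) := zip (iota 1 (size b)) b.

Lemma canon_fst b : map fst (canon b) = iota 1 (size b).
Proof. by rewrite -/(unzip1 _) unzip1_zip // size_iota. Qed.

Lemma canon_snd b : map snd (canon b) = b.
Proof. by rewrite -/(unzip2 _) unzip2_zip // size_iota. Qed.


Lemma wf_canon_gen b j : (0 < j)%N -> all (fun a => 0 < a)%N b ->
  all (fun p : nat * nat => (0 < p.1) && (0 < p.2))%N (zip (iota j (size b)) b).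
Proof.
elim: b j => [|x b IH] j //= j0 /andP [xp bp].
by rewrite j0 xp /=; apply: IH.
Qed.

Lemma wf_canon b : all (fun a => 0 < a)%N b -> wf_mono (canon b).
Proof. by move=> bp; rewrite /wf_mono canon_fst iota_ltn_sorted /=; apply: wf_canon_gen. Qed.

Lemma mlt_canon b j : mlt (canon b) j =
  if j \in iota 1 (size b) then nth 0%N b j.-1 else 0%N.
Proof.
rewrite /mlt canon_fst canon_snd; case: ifP => // jin.
congr nth.
have : j.-1 < size b by move: jin; rewrite mem_iota; lia.
move=> jl; have jl' : j.-1 < size (iota 1 (size b)) by rewrite size_iota.
have := index_uniq 0%N jl' (iota_uniq 1 (size b)).
rewrite nth_iota // => <-; congr index; move: jin; rewrite mem_iota; lia.
Qed.

Lemma nv_ssl F (HF : goodF F) a : all (fun x => 0 < x)%N a ->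
  nv (solid_sum_list [seq F x | x <- a]) = sumn a.
Proof.
elim: a => [|x a IH] //= /andP [xp ap].
by rewrite (proj1 HF x xp) IH.
Qed.

Lemma alldouble_F F (HF : goodF F) a : all (fun x => 0 < x)%N a ->
  alldouble [seq F x | x <- a].
Proof.
elim: a => [|x a IH] /=; first by move=> _ G [].
move=> /andP [xp ap] G [<-|GI]; first by apply: (proj2 HF x xp).
by apply: IH.
Qed.

Lemma nth_nvF F (HF : goodF F) a i : all (fun x => 0 < x)%N a ->
  nth 0%N [seq nv G | G <- [seq F x | x <- a]] i = nth 0%N a i.
Proof.
move=> ap; rewrite -map_comp.
case: (ltnP i (size a)) => il; last by rewrite !nth_default ?size_map.
rewrite (nth_map 0%N) //= (proj1 HF) //.
by move/allP: ap; apply; rewrite mem_nth.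
Qed.

Lemma sum_pos_ex N (P : pred 'I_N) : (0 < \sum_(u < N) P u)%N -> exists u, P u.
Proof.
case: (pickP P) => [u pu|none]; first by exists u.
by rewrite big1 // => u _; rewrite none.
Qed.

Definition Sset (G : ecdigraph) (m : seq (nat * nat)) :=
  [set k : {ffun 'I_(nv G) -> 'I_(bnd m)} |
      [forall a, (0 < k a)%N] && @proper_col G (fun a => nat_of_ord (k a))
      && (mono_of (fun a => nat_of_ord (k a)) == m)].

Lemma chromQE G m : chromQ G m = (#|Sset G m|)%:R%R.
Proof. by []. Qed.

Lemma S_block F (HF : goodF F) a b (k : {ffun _ -> _}) :
  all (fun x => 0 < x)%N a -> all (fun x => 0 < x)%N b ->
  k \in Sset (solid_sum_list [seq F x | x <- a]) (canon b) ->
  (size a <= size b)%N /\ (size a = size b -> forall u, nat_of_ord (k u) = (@blk _ u).+1).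
Proof.
move=> ap bp; rewrite inE => /andP [/andP [/forallP kp /forallP kpr] /eqP km].
have w := wf_canon bp.
have kin := vals_in_keys w kp km.
have := @block_arg _ (@blk [seq F x | x <- a]) (fun u => nat_of_ord (k u)) (size a) (size b).
apply.
- move=> u v /blk_edge_lt e; move: (kpr u) => /forallP /(_ v); by rewrite e.
- move=> i il.
  have : (0 < \sum_(u < nv (solid_sum_list [seq F x | x <- a])) (@blk _ u == i))%N.
    rewrite blk_count nth_nvF //.
    by move/allP: ap; apply; rewrite mem_nth.
  by case/sum_pos_ex => u /eqP; exists u.
- by move=> u; have := blk_lt u; rewrite size_map.
- by move=> u; have := kin u; rewrite canon_fst mem_iota add1n ltnS.
Qed.

Lemma cnt_blk a F (HF : goodF F) (k : 'I_(nv (solid_sum_list [seq F x | x <- a])) -> nat) i :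
  all (fun x => 0 < x)%N a -> (forall u, k u = (@blk _ u).+1) ->
  cnt k i = if i \in iota 1 (size a) then nth 0%N a i.-1 else 0%N.
Proof.
move=> ap kE; rewrite cntE count_enum_sum.
under eq_bigr do rewrite kE.
case: ifP => iin.
  have -> : i = i.-1.+1 by move: iin; rewrite mem_iota; lia.
  rewrite -(nth_nvF HF _ ap) -blk_count /=; apply: eq_bigr => u _; by rewrite eqSS.
rewrite big1 // => u _; case: eqP => // h.
move: iin; rewrite mem_iota -h add1n ltnS.
by rewrite ltnS; have := blk_lt u; rewrite size_map => ->.
Qed.

Lemma offdiag F (HF : goodF F) a b :
  all (fun x => 0 < x)%N a -> all (fun x => 0 < x)%N b ->
  chromQ (solid_sum_list [seq F x | x <- a]) (canon b) != 0%R ->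
  (size a <= size b)%N /\ (size a = size b -> a = b).
Proof.
move=> ap bp; rewrite chromQE Num.Theory.pnatr_eq0 -lt0n => /card_gt0P [k kS].
have [h1 h2] := S_block HF ap bp kS.
split => // sz; apply: (@eq_from_nth _ 0%N) => // i il.
have kE := h2 sz.
have w := wf_canon bp.
move: kS; rewrite inE => /andP [/andP [/forallP kp _] /eqP km].
have := (proj1 (mono_ofP w kp) km) i.+1.
have ii : i.+1 \in iota 1 (size a) by rewrite mem_iota; apply/andP; split; lia.
rewrite (cnt_blk HF _ ap kE) mlt_canon -sz ii.
by [].
Qed.

Lemma diag F (HF : goodF F) a : all (fun x => 0 < x)%N a ->
  chromQ (solid_sum_list [seq F x | x <- a]) (canon a) = 1%R.
Proof.
move=> ap; rewrite chromQE.
pose k0 : {ffun 'I_(nv (solid_sum_list [seq F x | x <- a])) -> 'I_(bnd (canon a))} :=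
  [ffun u => inord (@blk _ u).+1].
have k0E u : nat_of_ord (k0 u) = (@blk _ u).+1.
  rewrite ffunE inordK //; apply: key_bnd; rewrite canon_fst mem_iota add1n ltnS /=.
  by have := blk_lt u; rewrite size_map.
suff -> : Sset (solid_sum_list [seq F x | x <- a]) (canon a) = [set k0] by rewrite cards1.
apply/setP => k; rewrite in_set1; apply/idP/eqP => [kS|->].
  have [_ h] := S_block HF ap ap kS.
  by apply/ffunP => u; apply: val_inj; rewrite /= h // k0E.
rewrite inE; apply/andP; split; first (apply/andP; split).
- by apply/forallP => u; rewrite k0E.
- apply/forallP => u; apply/forallP => v; rewrite !k0E.
  case e : edge => [c|] //.
  case: (blk_edge (alldouble_F HF ap) e) => [[-> h]|[-> ->]] //=.
- apply/eqP; apply/mono_ofP; first exact: wf_canon.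
    by move=> u; rewrite k0E.
  by move=> i; rewrite (cnt_blk HF _ ap k0E) mlt_canon.
Qed.

Lemma size_seqs m k s : s \in seqs m k -> size s = m.
Proof.
elim: m s => [|m IH] s /=; first by rewrite inE => /eqP ->.
by case/flatten_mapP => i _ /mapP [t /IH <- ->].
Qed.

Lemma seqs_uniq m k : uniq (seqs m k).
Proof.
elim: m => [|m IH] //=.
apply: allpairs_uniq => //; first exact: iota_uniq.
by move=> [x y] [x' y'] _ _ /= [-> ->].
Qed.

Lemma mem_seqs s k : all (fun x => (0 < x) && (x <= k))%N s -> s \in seqs (size s) k.
Proof.
elim: s => [|x s IH] //= /andP [/andP [x0 xk] sp].
apply: allpairs_f; last exact: IH.
by rewrite mem_iota; apply/andP; split; lia.
Qed.

Lemma flatten_iota_uniq (f : nat -> seq (seq nat)) a b :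
  (forall m, uniq (f m)) -> (forall m s, s \in f m -> size s = m) ->
  uniq (flatten [seq f m | m <- iota a b]).
Proof.
move=> fu fs; elim: b a => [|b IH] a //=.
rewrite cat_uniq fu IH andbT /=; apply/hasPn => s /flatten_mapP [m].
rewrite mem_iota => /andP [h1 _] /fs sm; apply/negP => /fs; lia.
Qed.

Lemma compn_uniq n : uniq (compn n).
Proof.
rewrite /compn; apply: filter_uniq; exact: (@flatten_iota_uniq (fun m => seqs m n) 0 n.+1 (fun m => seqs_uniq m n) (fun m s => @size_seqs m n s)).
Qed.

Lemma size_le_sumn s : all (fun x => 0 < x)%N s -> (size s <= sumn s)%N.
Proof. elim: s => [|x s IH] //= /andP [x0 /IH]; lia. Qed.

Lemma mem_compn n s : (s \in compn n) = is_comp n s.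
Proof.
rewrite mem_filter; apply: andb_idr => /andP [sp /eqP sn].
apply/flatten_mapP; exists (size s).
  by rewrite mem_iota /= add0n ltnS -sn size_le_sumn.
apply: mem_seqs; apply/allP => x xs; move/allP: sp => /(_ x xs) ->.
rewrite -sn /=; elim: s xs {sn} => [|y s IH] //=; rewrite inE => /orP [/eqP ->|/IH]; lia.
Qed.

Lemma compn_size n s : s \in compn n -> (size s <= n)%N.
Proof. by rewrite mem_compn => /andP [sp /eqP <-]; apply: size_le_sumn. Qed.

Lemma chrom_homog G m : wf_mono m -> mdeg m != nv G -> chromQ G m = 0%R.
Proof.
move=> w hd; rewrite chromQE; apply/eqP; rewrite Num.Theory.pnatr_eq0 cards_eq0.
apply/eqP/setP => k; rewrite inE in_set0; apply/negP => /andP [_ /eqP km].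
by move: hd; rewrite -km mdeg_mono eqxx.
Qed.

Lemma chrom_qsym G m m' : wf_mono m -> wf_mono m' -> map snd m = map snd m' ->
  chromQ G m = chromQ G m'.
Proof.
move=> w w' e; rewrite !chromQE; congr (_%:R)%R; apply: anti_leq.
by rewrite (chrom_le G w w' e) (chrom_le G w' w (esym e)).
Qed.
Import GRing.Theory.

Definition XX (F : nat -> ecdigraph) (a : seq nat) : series :=
  chromQ (solid_sum_list [seq F x | x <- a]).

Fixpoint ccoef (F : nat -> ecdigraph) (n : nat) (f : series) (s : nat) : seq nat -> rat :=
  match s with
  | 0 => fun _ => 0%R
  | s'.+1 => fun b => if size b == s' then
       (f (canon b) - \sum_(a <- compn n | (size a < s')%N) ccoef F n f s' a * XX F a (canon b))%R
     else ccoef F n f s' b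
  end.

Lemma ccoef_stable F n f s b : (size b < s)%N -> ccoef F n f s b = ccoef F n f (size b).+1 b.
Proof.
elim: s => [//|s IH] bs /=.
case: eqP => [e|ne]; first by subst s; rewrite /= eqxx.
rewrite IH //; lia.
Qed.

Local Open Scope ring_scope.

Lemma comp_pos n a : a \in compn n -> all (fun x => 0 < x)%N a.
Proof. by rewrite mem_compn => /andP []. Qed.

Lemma comp_sum n a : a \in compn n -> sumn a = n.
Proof. by rewrite mem_compn => /andP [_ /eqP]. Qed.

Lemma offdiag' F (HF : goodF F) n a b : a \in compn n -> b \in compn n -> a != b ->
  XX F a (canon b) != 0 -> (size a < size b)%N.
Proof.
move=> an bn ab /(offdiag HF (comp_pos an) (comp_pos bn)) [h1 h2].
rewrite ltn_neqAle h1 andbT; apply/negP => /eqP /h2 e; by rewrite e eqxx in ab.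
Qed.

Theorem main F (HF : goodF F) n :
  is_basis (compn n) (QSym n) (XX F).
Proof.
split.
- move=> a an; split.
    move=> m w hd; apply: chrom_homog => //.
    by rewrite nv_ssl ?(comp_sum an) ?(comp_pos an).
  by move=> m m' w w' e; apply: chrom_qsym.
- move=> c H.
  suff: forall s b, b \in compn n -> (size b < s)%N -> c b = 0.
    by move=> h b bn; apply: (h (size b).+1).
  elim=> [//|s IH] b bn bs.
  have := H _ (wf_canon (comp_pos bn)).
  rewrite (bigD1_seq b) ?compn_uniq //= [XX F b _]/XX diag ?(comp_pos bn) // mulr1.
  rewrite big1_seq ?addr0 // => a /andP [ab an].
  case: (eqVneq (XX F a (canon b)) 0) => [-> | nz]; first by rewrite mulr0.
  rewrite IH ?mul0r //; have := offdiag' HF an bn ab nz; lia.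
- move=> f [fh fq].
  pose c := ccoef F n f n.+1.
  have key b : b \in compn n -> \sum_(a <- compn n) c a * XX F a (canon b) = f (canon b).
    move=> bn.
    rewrite (bigD1_seq b) ?compn_uniq //= [XX F b _]/XX diag ?(comp_pos bn) // mulr1.
    rewrite (bigID (fun a => size a < size b)%N) /=.
    rewrite [X in _ + (_ + X)]big1_seq ?addr0; last first.
      move=> a /andP [/andP [ab nlt] an].
      case: (eqVneq (XX F a (canon b)) 0) => [-> | nz]; first by rewrite mulr0.
      by move: nlt; rewrite (offdiag' HF an bn ab nz).
    have E : \sum_(a <- compn n | (a != b) && (size a < size b)%N) c a * XX F a (canon b)
      = \sum_(a <- compn n | (size a < size b)%N) ccoef F n f (size b) a * XX F a (canon b).
      rewrite big_seq_cond [RHS]big_seq_cond; apply: eq_big => [a|a /andP [an /andP [_ alt]]].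
        apply/idP/idP => [/andP [an /andP [_ ->]]|/andP [an alt]]; first by rewrite an.
        by rewrite an alt andbT; apply/negP => /eqP e; move: alt; rewrite e ltnn.
      rewrite /c ccoef_stable ?ltnS ?compn_size //.
      by rewrite [in RHS]ccoef_stable.
    rewrite E {1}/c ccoef_stable ?ltnS ?compn_size // [ccoef F n f (size b).+1 b]/= eqxx.
    by rewrite subrK.
  exists c => m w.
  case: (eqVneq (mdeg m) n) => hd; last first.
    rewrite fh // big1_seq // => a /andP [_ an].
    rewrite /XX chrom_homog ?mulr0 //.
    by rewrite nv_ssl ?(comp_sum an) ?(comp_pos an).
  set b := map snd m.
  have bn : b \in compn n.
    rewrite mem_compn; apply/andP; split; last by rewrite /b -hd.
    by case/andP: w => _ /allP al; apply/allP => x /mapP [p /al /andP [_ h] ->].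
  have wb := wf_canon (comp_pos bn).
  rewrite (fq m (canon b)) ?canon_snd // -key //.
  by apply: eq_bigr => a _; rewrite /XX (chrom_qsym _ w wb) ?canon_snd.
Qed.

Close Scope ring_scope.
Unset Implicit Arguments.

Theorem mainTheorem7 (F : nat -> ecdigraph)
  (HFv : forall i, (0 < i)%N -> nv (F i) = i)
  (HFs : forall i, (0 < i)%N -> simple_ecd (F i))
  (HFd : forall i, (0 < i)%N -> forall a b c, @edge (F i) a b = Some c -> c = Double)
  (n : nat) :
  is_basis (compn n) (QSym n)
    (fun alpha => chromQ (solid_sum_list [seq F a | a <- alpha])).
Proof.
exact: (main (conj HFv HFd) n).
Qed.
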